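(* There is an absolute constant $C > 0$ such that for all positive integers $n, k$ with $n \ge 3k$ there exist a positive integer $m$, a constant $H>0$, and a set $\Pi$ of linear-programming instances $\pi = (\bm{c}, \bm{A}, \bm{b}) \in \mathbb{R}^n \times \mathbb{R}^{m\times n} \times \mathbb{R}^m$ (each representing the LP $\max\{\bm{c}^\top \bm{x} : \bm{A}\bm{x} \le \bm{b}\}$) such that for every $\pi\in\Pi$, $\bm{x}=\mathbf{0}_n$ is feasible and the optimal value is at most $H$, and such that the class $\mathcal{U} = \{u(\bm{P}, \cdot) : \Pi \to \mathbb{R} \mid \bm{P} \in \mathbb{R}^{n\times k}\}$, where $u(\bm{P}, \pi) = \max\{\bm{c}^\top \bm{P}\bm{y} : \bm{A}\bm{P}\bm{y} \le \bm{b},\ \bm{y} \in \mathbb{R}^k\}$, satisfies $\mathrm{pdim}(\mathcal{U}) \ge C\, nk$. *)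

(* Defs.v *)
From HB Require Import structures.
From mathcomp Require Import all_boot all_order all_algebra.
From mathcomp Require Import all_classical all_reals ereal.
Set Implicit Arguments. Unset Strict Implicit. Unset Printing Implicit Defensive.
Import Order.TTheory GRing.Theory Num.Theory.
Local Open Scope ring_scope.
Local Open Scope classical_set_scope.

(* An LP instance pi = (c, A, b) in R^n x R^{m x n} x R^m, representing
   max { c^T x : A x <= b }.  Vectors are column vectors. *)
Definition lp_instance (R : realType) (n m : nat) : Type :=
  ('cV[R]_n * 'M[R]_(m, n) * 'cV[R]_m)%type.

Definition lp_c (R : realType) n m (pi : lp_instance R n m) : 'cV[R]_n := pi.1.1.
Definition lp_A (R : realType) n m (pi : lp_instance R n m) : 'M[R]_(m, n) := pi.1.2.
Definition lp_b (R : realType) n m (pi : lp_instance R n m) : 'cV[R]_m := pi.2.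

Definition vle (R : realType) p (u v : 'cV[R]_p) : Prop := forall i : 'I_p, u i 0 <= v i 0.

Definition dotv (R : realType) p (c x : 'cV[R]_p) : R := (c^T *m x) 0 0.

Definition lp_feasible (R : realType) n m (pi : lp_instance R n m) (x : 'cV[R]_n) : Prop :=
  vle (lp_A pi *m x) (lp_b pi).

(* Optimal value of max { c^T x : A x <= b } in the extended reals
   (+oo if unbounded, -oo if infeasible). *)
Definition lp_opt (R : realType) n m (pi : lp_instance R n m) : \bar R :=
  ereal_sup [set ((dotv (lp_c pi) x)%:E) | x in [set x | lp_feasible pi x]].

(* u(P, pi) = max { c^T P y : A P y <= b, y in R^k }, as a real number
   (it is finite on the instances considered in the theorem). *)
Definition u_val (R : realType) n m k (P : 'M[R]_(n, k)) (pi : lp_instance R n m) : R :=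
  fine (ereal_sup [set ((dotv (lp_c pi) (P *m y))%:E) |
                   y in [set y : 'cV[R]_k | vle (lp_A pi *m (P *m y)) (lp_b pi)]]).

Definition pshattered (Theta X : Type) {rR : realType} (F : Theta -> X -> rR)
  (N : nat) (pts : 'I_N -> X) (t : 'I_N -> rR) : Prop :=
  forall S : {set 'I_N}, exists theta : Theta,
    forall i : 'I_N, (t i <= F theta (pts i)) <-> (i \in S).

Definition pdim_ge (Theta X : Type) {rR : realType} (F : Theta -> X -> rR)
  (Pi : set X) (d : rR) : Prop :=
  exists (N : nat) (pts : 'I_N -> X) (t : 'I_N -> rR),
    (forall i, Pi (pts i)) /\ d <= N%:R /\ pshattered F pts t.

(* Main.v *)
Require Import Defs.
From HB Require Import structures.
From mathcomp Require Import all_boot all_order all_algebra.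
From mathcomp Require Import all_classical all_reals ereal.
From mathcomp Require Import zify.
Import Order.TTheory GRing.Theory Num.Theory.
Local Open Scope ring_scope.
Local Open Scope classical_set_scope.

Section Constr.
Variables (R : realType) (n k : nat) (Hkn : (k <= n)%N).
Definition TT := ('I_(n-k) * 'I_k)%type.
Definition NN := #|{: TT}|.

Lemma botP (i : 'I_(n-k)) : (k + i < n)%N.
Proof. have := ltn_ord i; lia. Qed.
Definition bot i : 'I_n := Ordinal (botP i).
Definition anc (j : 'I_k) : 'I_n := widen_ord Hkn j.

Definition bitS (S : {set 'I_NN}) (a : nat) (l : 'I_k) : bool :=
  [exists p : TT, ((p.1 : nat) == a) && (p.2 == l) && (enum_rank p \notin S)].
Definition Pmat S : 'M[R]_(n,k) := \matrix_(r, l)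
  (if (r < k)%N then ((r:nat) == l)%:R else (bitS S (r - k) l)%:R).
Definition vvec (p : TT) : 'cV[R]_n := \col_r
  (if ((r:nat) == p.2) || ((k <= r)%N && ((r:nat) != k + p.1)%N) then 1 else 0).
Definition inst (p : TT) : lp_instance R n (n+n) :=
  (\col_r ((r : nat) == p.2)%:R, col_mx (-1%:M) 1%:M, col_mx 0 (vvec p)).

Lemma vvec_ge0 p r : 0 <= vvec p r 0.
Proof. by rewrite mxE; case: ifP. Qed.

Lemma feasE p x : lp_feasible (inst p) x <->
  (forall r, 0 <= x r 0) /\ (forall r, x r 0 <= vvec p r 0).
Proof.
rewrite /lp_feasible /vle /lp_A /lp_b /= mul_col_mx mulNmx !mul1mx.
split.
  move=> H; split => r.
    by have := H (lshift n r); rewrite !col_mxEu !mxE oppr_le0.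
  by have := H (rshift n r); rewrite !col_mxEd.
move=> [H1 H2] i; rewrite -(splitK i); case: (fintype.split i) => r /=.
  by rewrite !col_mxEu !mxE oppr_le0.
by rewrite !col_mxEd.
Qed.

Lemma dotE p x : dotv (lp_c (inst p)) x = x (anc p.2) 0.
Proof.
rewrite /dotv /lp_c /= mxE (bigD1 (anc p.2)) //= big1.
  by rewrite !mxE eqxx mul1r addr0.
move=> r hr; rewrite !mxE.
suff -> : ((r : nat) == p.2) = false by rewrite mul0r.
apply/negbTE; apply: contra hr => /eqP h; apply/eqP/val_inj; by rewrite /= h.
Qed.

Lemma PyA S (y : 'cV[R]_k) l : (Pmat S *m y) (anc l) 0 = y l 0.
Proof.
rewrite mxE (bigD1 l) //= big1.
  by rewrite !mxE /= ltn_ord eqxx mul1r addr0.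
move=> l' hl; rewrite !mxE /= ltn_ord.
suff -> : ((l : nat) == l') = false by rewrite mul0r.
by apply/negbTE; apply: contra hl => /eqP h; apply/eqP/val_inj; rewrite /= h.
Qed.

Lemma PyB S (y : 'cV[R]_k) (i : 'I_(n-k)) :
  (Pmat S *m y) (bot i) 0 = \sum_l (bitS S i l)%:R * y l 0.
Proof.
rewrite mxE; apply: eq_bigr => l _; rewrite !mxE /=.
have -> : (k + i < k)%N = false by lia.
by rewrite addKn.
Qed.

Lemma bitSE S (p : TT) : bitS S p.1 p.2 = (enum_rank p \notin S).
Proof.
apply/existsP/idP.
  move=> [q /andP[/andP[/eqP h1 /eqP h2] h3]].
  have -> : p = q by case: p q h1 h2 h3 => a b [c d] /= h1 h2 _; rewrite h2;
     congr pair; apply/val_inj.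
  done.
by move=> h; exists p; rewrite !eqxx h.
Qed.

Lemma uval S p : u_val (Pmat S) (inst p) = if enum_rank p \in S then 1 else 0.
Proof.
rewrite /u_val.
have ub1 : forall y, vle (lp_A (inst p) *m (Pmat S *m y)) (lp_b (inst p)) ->
    (Pmat S *m y) (anc p.2) 0 <= 1.
  move=> y /(feasE p (Pmat S *m y)) [_ H2].
  by have := H2 (anc p.2); rewrite [vvec _ _ _]mxE /= eqxx.
case: ifP => hS.
  suff -> : ereal_sup [set ((dotv (lp_c (inst p)) (Pmat S *m y))%:E) |
                   y in [set y : 'cV[R]_k | vle (lp_A (inst p) *m (Pmat S *m y))
                      (lp_b (inst p))]] = 1%:E by [].
  apply/le_anti/andP; split.
    by apply: ge_ereal_sup => _ [y Hy <-]; rewrite lee_fin dotE; apply: ub1.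
  apply: ereal_sup_ubound; exists (delta_mx p.2 0).
    apply/(feasE p); rewrite -colE; split => r; rewrite mxE.
      by rewrite mxE; case: ifP.
    rewrite !mxE; case: ifP => hv.
      by case: eqP => _ /=; [rewrite lexx | case: ifP].
    have hk : (k <= r)%N by rewrite leqNgt hv.
    have -> : ((r : nat) == p.2) = false by have := ltn_ord p.2; lia.
    rewrite hk /=; case: (eqVneq (r : nat) (k + p.1)%N) => [hr|hr] /=.
      by rewrite hr addKn bitSE hS.
    by case: (bitS _ _ _) => /=; rewrite ?ler01 ?lexx.
  by rewrite dotE -colE !mxE /= ltn_ord eqxx.
suff -> : ereal_sup [set ((dotv (lp_c (inst p)) (Pmat S *m y))%:E) |
                 y in [set y : 'cV[R]_k | vle (lp_A (inst p) *m (Pmat S *m y))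
                    (lp_b (inst p))]] = 0%:E by [].
apply/le_anti/andP; split.
  apply: ge_ereal_sup => _ [y Hy <-]; rewrite lee_fin dotE.
  move/(feasE p): Hy => [H1 H2].
  have y0 : forall l, l != p.2 -> y l 0 = 0.
    move=> l hl; apply/le_anti/andP; split.
      have := H2 (anc l); rewrite PyA mxE /=.
      have -> : ((l : nat) == p.2) = false.
        by apply/negbTE; apply: contra hl => /eqP h; apply/eqP/val_inj.
      by have -> : (k <= l)%N = false by have := ltn_ord l; lia.
    by have := H1 (anc l); rewrite PyA.
  have := H2 (bot p.1); rewrite PyB (bigD1 p.2) //= big1; last first.
    by move=> l hl; rewrite y0 // mulr0.
  rewrite bitSE hS mul1r addr0 mxE /=.
  have -> : ((k + p.1)%N == p.2 :> nat) = false by have := ltn_ord p.2; lia.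
  by rewrite eqxx andbF PyA.
apply: ereal_sup_ubound; exists 0.
  apply/(feasE p); rewrite mulmx0; split => r; rewrite mxE //; exact: vvec_ge0.
by rewrite mulmx0 dotE mxE.
Qed.

End Constr.

Theorem theorem2 :
  exists C : rat, 0 < C /\
  forall (R : realType) (n k : nat), (0 < n)%N -> (0 < k)%N -> (3 * k <= n)%N ->
  exists (m : nat) (H : R) (Pi : set (lp_instance R n m)),
    (0 < m)%N /\ 0 < H /\
    (forall pi, Pi pi -> lp_feasible pi 0 /\ (lp_opt pi <= H%:E)%E) /\
    pdim_ge (fun (P : 'M[R]_(n, k)) (pi : lp_instance R n m) => u_val P pi)
      Pi (ratr C * n%:R * k%:R).
Proof.
exists (3%:R^-1); split; first by rewrite invr_gt0 ltr0n.
move=> R n k hn hk h3k.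
have Hkn : (k <= n)%N by lia.
exists (n + n)%N, 1, [set pi | exists p, pi = inst R n k p].
split; first by lia.
split; first exact: ltr01.
split.
  move=> _ [p ->]; split.
    apply/(feasE R n k p); split => r; rewrite mxE //; exact: vvec_ge0.
  apply: ge_ereal_sup => _ [x Hx <-]; rewrite lee_fin dotE.
  move/(feasE R n k p): Hx => [_ H2].
  by have := H2 (anc n k Hkn p.2); rewrite [vvec _ _ _ _ _ _]mxE /= eqxx.
exists (NN n k), (fun q => inst R n k (enum_val q)), (fun _ => 1).
split; first by move=> i; exists (enum_val i).
split.
  rewrite /NN card_prod !card_ord fmorphV rmorph_nat -mulrA ler_pdivrMl ?ltr0n //.
  rewrite -!natrM ler_nat mulnA; apply: leq_mul => //; lia.
move=> S; exists (Pmat R n k S) => q.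
rewrite (@uval _ _ _ Hkn) (_ : enum_rank (enum_val q) = q); last exact: enum_valK.
by case: ifP => h; split => //; rewrite ?lexx ?ler10.
Qed.
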